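(* Let $Q$ be an automorphic loop of nilpotency class $3$, and let $a,b,c,d\in Q$. (i) If $(a,c,d),(b,c,d)\in Z(Q)$ then $(ab,c,d)=(a,c,d)(b,c,d)$. (ii) If $(a,b,d),(a,c,d)\in Z(Q)$ then $(a,bc,d)=(a,b,d)(a,c,d)$. (iii) If $(a,b,c),(a,b,d)\in Z(Q)$ then $(a,b,cd)=(a,b,c)(a,b,d)$.
   Context: A loop is a set with a binary operation such that all left and right translations $L_a:b\mapsto ab$, $R_a:b\mapsto ba$ are bijections and there is a two-sided identity $1$. The inner mapping group is the stabilizer of $1$ in the group generated by all translations; $Q$ is automorphic if all inner mappings are automorphisms. The associator $(a,b,c)$ is defined by $(ab)c=(a(bc))(a,b,c)$. The center $Z(Q)$ is the set of elements fixed by all inner mappings; $Z_0=1$, $Z_{i+1}(Q)$ is the preimage of $Z(Q/Z_i(Q))$, and $Q$ has nilpotency class $n$ if $Z_{n-1}(Q)\neq Q=Z_n(Q)$. *)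

(* Defs.v *)
From mathcomp Require Import ssreflect ssrfun ssrbool.
From Stdlib Require Import ClassicalEpsilon.

Set Implicit Arguments.
Unset Strict Implicit.

Record loop : Type := Loop {
  lcar :> Type;
  lmul : lcar -> lcar -> lcar;
  lone : lcar;
  lone_l : forall x, lmul lone x = x;
  lone_r : forall x, lmul x lone = x;
  lL_bij : forall a, bijective (lmul a);
  lR_bij : forall a, bijective (fun x => lmul x a)
}.

Section LoopDefs.
Variable Q : loop.
Local Notation "x * y" := (lmul x y).
Local Notation "1" := (lone Q).

Lemma bij_inv_ex (f : Q -> Q) : bijective f ->
  exists g : Q -> Q, cancel f g /\ cancel g f.
Proof. by case=> g fg gf; exists g. Qed.

Definition ldiv (a : Q) : Q -> Q :=
  proj1_sig (constructive_indefinite_description _ (bij_inv_ex (lL_bij a))).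

Definition assoc (a b c : Q) : Q := ldiv (a * (b * c)) ((a * b) * c).

(* Congruence modulo a subset N (intended: a normal subloop):
   x ~ y iff x lies in the coset yN, i.e. x = y n with n in N.
   This is the equality of the quotient loop Q/N on representatives. *)
Definition cong (N : Q -> Prop) (x y : Q) : Prop := exists n, N n /\ x = y * n.

(* The multiplication group of Q/N, represented by maps on Q acting on
   representatives: generated by all left and right translations, closed
   under composition and under taking inverses (modulo ~N). For N = {1}
   the relation ~N is equality and this is exactly the group Mlt(Q)
   generated by all translations. *)
Inductive mlt (N : Q -> Prop) : (Q -> Q) -> Prop :=
  | mlt_L a : mlt N (lmul a)
  | mlt_R a : mlt N (fun x => x * a)
  | mlt_comp f g : mlt N f -> mlt N g -> mlt N (fun x => f (g x))
  | mlt_inv f g : mlt N f ->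
      (forall x y, cong N x y -> cong N (g x) (g y)) ->
      (forall x, cong N (f (g x)) x) -> (forall x, cong N (g (f x)) x) ->
      mlt N g.

Definition inner_map (N : Q -> Prop) (f : Q -> Q) : Prop :=
  mlt N f /\ cong N (f 1) 1.

(* Upper central series: Z_0 = 1, Z_{i+1} = preimage of Z(Q/Z_i), where the
   center of Q/Z_i is the set of elements fixed by all inner mappings. *)
Fixpoint upper_center (i : nat) : Q -> Prop :=
  match i with
  | 0 => fun x => x = 1
  | S i' => fun x => forall f, inner_map (upper_center i') f ->
                      cong (upper_center i') (f x) x
  end.

Definition center : Q -> Prop := upper_center 1.

Definition nilpotency_class (n : nat) : Prop :=
  (exists x, ~ upper_center (Nat.pred n) x) /\ (forall x, upper_center n x).

(* Automorphic: every inner mapping of Q is an automorphism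
   (inner mappings are bijections by construction). *)
Definition automorphic : Prop :=
  forall f, inner_map (fun x => x = 1) f -> forall x y, f (x * y) = f x * f y.

End LoopDefs.

(* Main.v *)
Require Import Defs.
From mathcomp Require Import ssreflect ssrfun ssrbool.
From Stdlib Require Import ClassicalEpsilon.

Section Helpers.
Variable Q : loop.
Local Notation "x * y" := (lmul x y).
Local Notation "1" := (lone Q).
Definition N1 : Q -> Prop := fun x => x = 1.

Lemma ldivK (u x : Q) : u * ldiv u x = x.
Proof. rewrite /ldiv; case: (constructive_indefinite_description _ _) => g [h1 h2] /=; exact: h2. Qed.
Lemma mulK (u x : Q) : ldiv u (u * x) = x.
Proof. rewrite /ldiv; case: (constructive_indefinite_description _ _) => g [h1 h2] /=; exact: h1. Qed.

Lemma ldivv (u : Q) : ldiv u u = 1.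
Proof. by rewrite -{2}(lone_r u) mulK. Qed.

Lemma linj (u x y : Q) : u * x = u * y -> x = y.
Proof. move=> h; by rewrite -(mulK u x) h mulK. Qed.
Lemma rinj (u x y : Q) : x * u = y * u -> x = y.
Proof. case: (lR_bij u) => g h1 _ h. by rewrite -(h1 x) -(h1 y) /= h. Qed.

Lemma assoc_def (x y z : Q) : (x * y) * z = (x * (y * z)) * assoc x y z.
Proof. by rewrite /assoc ldivK. Qed.
Lemma assoc_uniq (x y z w : Q) : (x * y) * z = (x * (y * z)) * w -> assoc x y z = w.
Proof. move=> h; by rewrite /assoc h mulK. Qed.

Lemma mlt_inv1 f g : mlt N1 f -> cancel f g -> cancel g f -> mlt N1 g.
Proof.
move=> Hf fg gf; apply: (mlt_inv Hf).
- move=> x y [n [Hn Hx]]; exists 1; split => //.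
  by rewrite lone_r Hx Hn lone_r.
- move=> x; exists 1; split => //; by rewrite gf lone_r.
- move=> x; exists 1; split => //; by rewrite fg lone_r.
Qed.

Lemma cong1 (x y : Q) : x = y -> cong N1 x y.
Proof. move=> ->; exists 1; split => //; by rewrite lone_r. Qed.

Lemma innerR (x y : Q) : exists f, inner_map N1 f /\ forall w, (w * x) * y = f w * (x * y).
Proof.
case: (lR_bij (x * y)) => ri h1 h2.
exists (fun w => ri ((w * x) * y)); split; last by move=> w; rewrite h2.
split.
- apply: (@mlt_comp _ _ ri (fun w => (w * x) * y)).
  + exact: ((@mlt_inv1 _ ri (mlt_R N1 _) h1 h2)).
  + exact: (@mlt_comp _ _ (fun w => w * y) (fun w => w * x) (mlt_R N1 _) (mlt_R N1 _)).
- apply: cong1; rewrite lone_l. by have := h1 1; rewrite /= lone_l.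
Qed.

Lemma innerL (x y : Q) : exists f, inner_map N1 f /\ forall w, x * (y * w) = (x * y) * f w.
Proof.
exists (fun w => ldiv (x * y) (x * (y * w))); split; last by move=> w; rewrite ldivK.
split.
- apply: (@mlt_comp _ _ (ldiv (x * y)) (fun w => x * (y * w))).
  + apply: (@mlt_inv1 _ (ldiv (x * y)) (mlt_L N1 (x * y))) => w; [exact: mulK | exact: ldivK].
  + exact: (@mlt_comp _ _ (lmul x) (lmul y) (mlt_L N1 _) (mlt_L N1 _)).
- apply: cong1; by rewrite lone_r ldivv.
Qed.

Lemma innerT (x : Q) : exists f, inner_map N1 f /\ forall w, x * w = f w * x.
Proof.
case: (lR_bij x) => ri h1 h2.
exists (fun w => ri (x * w)); split; last by move=> w; rewrite h2.
split.
- apply: (@mlt_comp _ _ ri (lmul x)); last exact: (mlt_L N1).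
  exact: ((@mlt_inv1 _ ri (mlt_R N1 _) h1 h2)).
- apply: cong1; rewrite lone_r. by have := h1 1; rewrite /= lone_l.
Qed.

Lemma innerL2 (x y : Q) : exists f, inner_map N1 f /\ forall w, (x * y) * w = x * (y * f w).
Proof.
exists (fun w => ldiv y (ldiv x ((x * y) * w))); split; last by move=> w; rewrite !ldivK.
split.
- apply: (@mlt_comp _ _ (ldiv y) (fun w => ldiv x ((x * y) * w))).
  + apply: (@mlt_inv1 _ (ldiv y) (mlt_L N1 y)) => w; [exact: mulK | exact: ldivK].
  + apply: (@mlt_comp _ _ (ldiv x) (lmul (x * y))); last exact: (mlt_L N1).
    apply: (@mlt_inv1 _ (ldiv x) (mlt_L N1 x)) => w; [exact: mulK | exact: ldivK].
- apply: cong1; by rewrite lone_r mulK ldivv.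
Qed.

Lemma innerM (x y : Q) : exists f, inner_map N1 f /\ forall w, (x * w) * y = x * (f w * y).
Proof.
case: (lR_bij y) => ri h1 h2.
exists (fun w => ri (ldiv x ((x * w) * y))); split; last by move=> w; rewrite h2 ldivK.
split.
- apply: (@mlt_comp _ _ ri (fun w => ldiv x ((x * w) * y))).
  + exact: ((@mlt_inv1 _ ri (mlt_R N1 _) h1 h2)).
  + apply: (@mlt_comp _ _ (ldiv x) (fun w => (x * w) * y)).
    * apply: (@mlt_inv1 _ (ldiv x) (mlt_L N1 x)) => w; [exact: mulK | exact: ldivK].
    * exact: (@mlt_comp _ _ (fun w => w * y) (lmul x) (mlt_R N1 _) (mlt_L N1 _)).
- apply: cong1; rewrite lone_r mulK. by have := h1 1; rewrite /= lone_l.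
Qed.

Lemma center_fix {z : Q} {f} : center z -> inner_map N1 f -> f z = z.
Proof. move=> Hz Hf; case: (Hz f Hf) => n [-> ->]; by rewrite lone_r. Qed.

Lemma centA (z : Q) : center z -> forall x y, x * (y * z) = (x * y) * z.
Proof. move=> Hz x y; case: (innerL x y) => f [Hf Hw]; by rewrite Hw (center_fix Hz Hf). Qed.

Lemma centB (z : Q) : center z -> forall x y, (x * z) * y = (x * y) * z.
Proof.
move=> Hz x y.
have C1 : x * z = z * x.
  case: (innerT x) => f [Hf Hw]; by rewrite Hw (center_fix Hz Hf).
have C3 : (z * x) * y = z * (x * y).
  case: (innerR x y) => f [Hf Hw]; by rewrite Hw (center_fix Hz Hf).
have C1' : z * (x * y) = (x * y) * z.
  case: (innerT (x * y)) => f [Hf Hw]; by rewrite Hw (center_fix Hz Hf).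
by rewrite C1 C3 C1'.
Qed.

End Helpers.
Arguments innerR {Q}. Arguments centA {Q z}. Arguments centB {Q z}. Arguments assoc_def {Q}. Arguments assoc_uniq {Q x y z w}. Arguments innerL2 {Q}. Arguments innerM {Q}.
Arguments rinj {Q} u {x y}. Arguments linj {Q} u {x y}.


Theorem lemma2p4 (Q : loop) (HA : automorphic Q) (Hn : nilpotency_class Q 3)
  (a b c d : Q) :
  (center (assoc a c d) -> center (assoc b c d) ->
     assoc (lmul a b) c d = lmul (assoc a c d) (assoc b c d)) /\
  (center (assoc a b d) -> center (assoc a c d) ->
     assoc a (lmul b c) d = lmul (assoc a b d) (assoc a c d)) /\
  (center (assoc a b c) -> center (assoc a b d) ->
     assoc a b (lmul c d) = lmul (assoc a b c) (assoc a b d)).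
Proof.
split; [|split].
- move=> Ha Hb; case: (innerR c d) => f [Hf Hw].
  have Hm := HA f Hf.
  have Fx : forall x, center (assoc x c d) -> f x = lmul x (assoc x c d).
    move=> x Hx; apply: (rinj (lmul c d)).
    by rewrite -Hw assoc_def (centB Hx).
  apply: assoc_uniq.
  rewrite Hw Hm (Fx a Ha) (Fx b Hb).
  by rewrite !(centA Hb) !(centB Ha) !(centB Hb) !(centB Ha).
- move=> Hb Hc; case: (innerM a d) => f [Hf Hw].
  have Hm := HA f Hf.
  have Fx : forall x, center (assoc a x d) -> f x = lmul x (assoc a x d).
    move=> x Hx; apply: (rinj d); apply: (linj a).
    by rewrite -Hw assoc_def (centB Hx) (centA Hx).
  apply: assoc_uniq.
  rewrite Hw Hm (Fx b Hb) (Fx c Hc).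
  rewrite [RHS](centA Hc) (centA Hc (lmul b _) c) (centB Hb b c) (centB Hc _ d) (centB Hb _ d) (centA Hc a).
  by rewrite (centA Hb a).
- move=> Hc Hd; case: (innerL2 a b) => f [Hf Hw].
  have Hm := HA f Hf.
  have Fx : forall x, center (assoc a b x) -> f x = lmul x (assoc a b x).
    move=> x Hx; apply: (linj b); apply: (linj a).
    by rewrite -Hw assoc_def !(centA Hx).
  apply: assoc_uniq.
  rewrite Hw Hm (Fx c Hc) (Fx d Hd).
  set zc := assoc a b c; set zd := assoc a b d.
  rewrite (centA Hd (lmul c zc) d) (centB Hc c d) (centA Hd b) (centA Hd a).
  by rewrite (centA Hc b) (centA Hc a) (centA Hd).
Qed.
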